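(* Let $\Gamma$ be a metric graph and $D$ a vertex-supported effective divisor on $\Gamma$. Then each vertex (0-dimensional cell) of the cell complex $|D|$ is an anchor cell.
   Context: A metric graph $\Gamma=(V,E)$ is a connected undirected graph whose edges have positive real lengths $M_e$. Divisors are finite formal $\mathbb{Z}$-combinations of points of $\Gamma$; effective means nonnegative coefficients, vertex-supported means support in $V$. A rational function is continuous, piecewise linear on edges with finitely many pieces and integer slopes; $(f)=\sum_x\mathrm{ord}_x(f)x$ with $\mathrm{ord}_x(f)$ the sum of outgoing slopes at $x$. $R(D)=\{f:D+(f)\ge 0\}$, $|D|=\{D+(f):f\in R(D)\}$. Cells of $|D|$: identifying each open edge $e$ with $(0,M_e)$, a cell is given by nonnegative integers $d_v$ ($v\in V$), ordered partitions $d_e=\sum_{i=1}^{r_e}d_e^i$ into positive integers on some edges, and integers $m_e$ ($e\in E$); $L\in|D|$ belongs to it iff $L(v)=d_v$, $L|_{e^\circ}=\sum_i d_e^i x_i$ with $0<x_1<\dots<x_{r_e}<M_e$ on edges with a partition and $L|_{e^\circ}=0$ otherwise, and each $f\in R(D)$ with $L=D+(f)$ has outgoing slope $m_e$ at $0\in e$. Elements of a cell are its representatives. For a representative $L$ of a cell $C$, with $I_L=\{x\in\Gamma\setminus V: L(x)>0\}$, $\dim C$ is one less than the number of connected components of $\Gamma\setminus I_L$. A divisor $L$ is an anchor divisor if for each edge of $\Gamma$ there is at most one interior point $x$ of that edge with $L(x)>0$. A cell of $|D|$ is an anchor cell if all its representatives are anchor divisors. *)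

(* Defs.v *)
From Stdlib Require Import Reals ZArith Relations.
From mathcomp Require Import ssreflect ssrbool ssrfun eqtype ssrnat seq fintype fingraph.

Set Implicit Arguments.
Unset Strict Implicit.
Unset Printing Implicit Defensive.

Local Open Scope R_scope.

(** * Metric graphs
    A finite connected (multi)graph with vertex set [mg_V], edge set [mg_E],
    each edge e oriented from [mg_src e] to [mg_tgt e] (this orientation is the
    identification of the open edge with (0, M_e), 0 corresponding to the source),
    and positive real lengths [mg_len e] = M_e. *)
Definition graph_adj (V E : finType) (src tgt : E -> V) : rel V :=
  fun u v => [exists e, ((src e == u) && (tgt e == v)) || ((src e == v) && (tgt e == u))].

Record metric_graph := MetricGraph {
  mg_V : finType;
  mg_E : finType;
  mg_src : mg_E -> mg_V;
  mg_tgt : mg_E -> mg_V;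
  mg_len : mg_E -> R;
  mg_len_pos : forall e, 0 < mg_len e;
  mg_connected : forall u v : mg_V, connect (graph_adj mg_src mg_tgt) u v
}.

Section MetricGraph.
Variable G : metric_graph.
Local Notation V := (mg_V G).
Local Notation E := (mg_E G).
Local Notation src := (@mg_src G).
Local Notation tgt := (@mg_tgt G).
Local Notation len := (@mg_len G).

(** Points of Γ: a vertex, or the point of coordinate t of the open edge e.
    Only the [valid_pt] ones (0 < t < M_e) are points of Γ. *)
Inductive pt : Type :=
| PV : V -> pt
| PE : E -> R -> pt.

Definition valid_pt (x : pt) : Prop :=
  match x with
  | PV _ => True
  | PE e t => 0 < t < len e
  end.

Definition on_edge (e : E) (x : pt) (a : R) : Prop :=
  (x = PV (src e) /\ a = 0) \/ (x = PV (tgt e) /\ a = len e) \/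
  (x = PE e a /\ 0 < a < len e).

(** Divisors: Z-valued functions on points (values at non-valid points are
    irrelevant). *)
Definition divisor := pt -> Z.

Definition effective (D : divisor) : Prop :=
  forall x, valid_pt x -> (0 <= D x)%Z.

Definition vertex_supported (D : divisor) : Prop :=
  forall e t, valid_pt (PE e t) -> D (PE e t) = 0%Z.

(** Rational functions: values on vertices and, on each closed edge
    [0, M_e], a function of the coordinate. *)
Record ratfun := RatFun {
  rf_v : V -> R;
  rf_e : E -> R -> R
}.

Definition is_ratfun (f : ratfun) : Prop :=
  (forall e, rf_e f e 0 = rf_v f (src e) /\ rf_e f e (len e) = rf_v f (tgt e)) /\
  (forall e, exists (n : nat) (a : nat -> R) (s : nat -> Z),
      a 0%N = 0 /\ a n = len e /\
      (forall i, (i < n)%N -> a i < a i.+1) /\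
      (forall i t, (i < n)%N -> a i <= t <= a i.+1 ->
          rf_e f e t = rf_e f e (a i) + IZR (s i) * (t - a i))).

Definition right_slope (g : R -> R) (t : R) (s : Z) : Prop :=
  exists eps, 0 < eps /\ forall h, 0 < h < eps -> g (t + h) = g t + IZR s * h.

Definition left_slope (g : R -> R) (t : R) (s : Z) : Prop :=
  exists eps, 0 < eps /\ forall h, 0 < h < eps -> g (t - h) = g t - IZR s * h.

Definition sumZ (l : seq Z) : Z := foldr Z.add 0%Z l.

(** [ord_at f x k]: ord_x(f) = k, the sum of outgoing slopes of f at x.
    The outgoing slope along e at its source end is the right slope at 0;
    at its target end it is minus the left slope at M_e. *)
Definition ord_at (f : ratfun) (x : pt) (k : Z) : Prop :=
  match x with
  | PE e t => exists sr sl : Z,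
      right_slope (rf_e f e) t sr /\ left_slope (rf_e f e) t sl /\ k = (sr - sl)%Z
  | PV v => exists sr sl : E -> Z,
      (forall e, right_slope (rf_e f e) 0 (sr e)) /\
      (forall e, left_slope (rf_e f e) (len e) (sl e)) /\
      k = (sumZ [seq sr e | e <- enum E & src e == v]
           - sumZ [seq sl e | e <- enum E & tgt e == v])%Z
  end.

Definition eq_plus_div (L D : divisor) (f : ratfun) : Prop :=
  forall x, valid_pt x -> ord_at f x (L x - D x)%Z.

Definition in_linsys (D L : divisor) : Prop :=
  exists f, is_ratfun f /\ eq_plus_div L D f /\ effective L.

(** Cell data: d_v, ordered partitions (possibly empty list = no partition),
    and slopes m_e. *)
Record cell_data := CellData {
  cd_v : V -> nat;
  cd_p : E -> seq nat;
  cd_m : E -> Z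
}.

Definition valid_cell_data (c : cell_data) : Prop :=
  forall e, all (fun d => 0 < d)%N (cd_p c e).

Definition in_cell (D : divisor) (c : cell_data) (L : divisor) : Prop :=
  in_linsys D L /\
  (forall v, L (PV v) = Z.of_nat (cd_v c v)) /\
  (forall e, exists xs : seq R,
      size xs = size (cd_p c e) /\
      (forall i, (i < size xs)%N -> 0 < nth 0 xs i < len e) /\
      (forall i j, (i < j)%N -> (j < size xs)%N -> nth 0 xs i < nth 0 xs j) /\
      (forall i, (i < size xs)%N -> L (PE e (nth 0 xs i)) = Z.of_nat (nth 0%N (cd_p c e) i)) /\
      (forall t, 0 < t < len e -> (forall i, (i < size xs)%N -> t <> nth 0 xs i) ->
          L (PE e t) = 0%Z)) /\
  (forall f, is_ratfun f -> eq_plus_div L D f -> effective L ->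
      forall e, right_slope (rf_e f e) 0 (cd_m c e)).

Definition interior_supp (L : divisor) (x : pt) : Prop :=
  exists e t, x = PE e t /\ 0 < t < len e /\ (0 < L x)%Z.

Definition seg_step (I : pt -> Prop) (x y : pt) : Prop :=
  valid_pt x /\ ~ I x /\ valid_pt y /\ ~ I y /\
  exists e a b, on_edge e x a /\ on_edge e y b /\
    forall t, Rmin a b < t < Rmax a b -> ~ I (PE e t).

Definition n_components (I : pt -> Prop) (n : nat) : Prop :=
  exists comp : pt -> nat,
    (forall x, valid_pt x -> ~ I x -> (comp x < n)%N) /\
    (forall k, (k < n)%N -> exists x, valid_pt x /\ ~ I x /\ comp x = k) /\
    (forall x y, valid_pt x -> ~ I x -> valid_pt y -> ~ I y ->
       (comp x = comp y <-> clos_refl_sym_trans pt (seg_step I) x y)).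

Definition cell_dim (D : divisor) (c : cell_data) (k : nat) : Prop :=
  exists L, in_cell D c L /\ n_components (interior_supp L) k.+1.

Definition anchor_divisor (L : divisor) : Prop :=
  forall e t1 t2, 0 < t1 < len e -> 0 < t2 < len e ->
    (0 < L (PE e t1))%Z -> (0 < L (PE e t2))%Z -> t1 = t2.

Definition anchor_cell (D : divisor) (c : cell_data) : Prop :=
  forall L, in_cell D c L -> anchor_divisor L.

End MetricGraph.

(* Main.v *)
Require Import Defs.
From Stdlib Require Import Reals ZArith.
From mathcomp Require Import ssreflect ssrbool ssrnat seq fintype.
From mathcomp Require Import eqtype.
From Stdlib Require Import Lra Lia Classical Relations.

Set Implicit Arguments.
Section S.
Variable G : metric_graph.
Local Open Scope R_scope.

Lemma core (L : divisor G) (e e' : mg_E G) a b x y ax ay tx :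
  0 < a -> b < mg_len e -> a < b ->
  (0 < L (PE e a))%Z -> (0 < L (PE e b))%Z ->
  on_edge e' x ax -> on_edge e' y ay ->
  (forall t, Rmin ax ay < t < Rmax ax ay -> ~ interior_supp L (PE e' t)) ->
  ~ interior_supp L y ->
  x = PE e tx -> a < tx < b -> exists ty, y = PE e ty /\ a < ty < b.
Proof.
move=> Ha Hb Hab La Lb Hx Hy Hseg HyI Hxe Htx; subst x.
have IA : interior_supp L (PE e a) by exists e, a; split => //; split => //; lra.
have IB : interior_supp L (PE e b) by exists e, b; split => //; split => //; lra.
case: Hx => [[Hx _]|[[Hx _]|[Hx _]]]; try discriminate.
injection Hx => ? ?; subst e' ax.
case: Hy => [[Hy Hay]|[[Hy Hay]|[Hy Hay]]]; try subst ay.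
- exfalso; apply: (Hseg a) => //; unfold Rmin, Rmax; destruct Rle_dec; lra.
- exfalso; apply: (Hseg b) => //; unfold Rmin, Rmax; destruct Rle_dec; lra.
- subst y.
  destruct (Rle_lt_dec ay a) as [h|h].
  + exfalso. destruct (Req_dec ay a) as [->|h'] ; first by apply: HyI.
    apply: (Hseg a) => //; unfold Rmin, Rmax; destruct Rle_dec; lra.
  + destruct (Rle_lt_dec b ay) as [h2|h2].
    * exfalso. destruct (Req_dec ay b) as [->|h'] ; first by apply: HyI.
      apply: (Hseg b) => //; unfold Rmin, Rmax; destruct Rle_dec; lra.
    * by exists ay; split => //; lra.
Qed.

Lemma inv_crst (L : divisor G) (e : mg_E G) a b :
  0 < a -> b < mg_len e -> a < b ->
  (0 < L (PE e a))%Z -> (0 < L (PE e b))%Z ->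
  forall x y, clos_refl_sym_trans (pt G) (seg_step (interior_supp L)) x y ->
  ((exists t, x = PE e t /\ a < t < b) -> (exists t, y = PE e t /\ a < t < b)) /\
  ((exists t, y = PE e t /\ a < t < b) -> (exists t, x = PE e t /\ a < t < b)).
Proof.
move=> Ha Hb Hab La Lb x y H; elim: H => {x y}.
- move=> x y [_ [HxI [_ [HyI [e' [ax [ay [Hx [Hy Hs]]]]]]]]]; split.
  + move=> [t [Ht1 Ht2]]; exact: (core Ha Hb Hab La Lb Hx Hy Hs HyI Ht1 Ht2).
  + move=> [t [Ht1 Ht2]].
    have Hs' : forall t, Rmin ay ax < t < Rmax ay ax -> ~ interior_supp L (PE e' t).
      by move=> u hu; apply: Hs; rewrite Rmin_comm Rmax_comm.
    exact: (core Ha Hb Hab La Lb Hy Hx Hs' HxI Ht1 Ht2).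
- by move=> x; split.
- by move=> x y _ [h1 h2]; split.
- by move=> x y z _ [h1 h2] _ [h3 h4]; split => h; [apply: h3; apply: h1 | apply: h2; apply: h4].
Qed.

End S.

Theorem lemma2p10 (G : metric_graph) (D : divisor G) :
  effective D -> vertex_supported D ->
  forall c : cell_data G, valid_cell_data c ->
  cell_dim D c 0 -> anchor_cell D c.
Proof.
move=> HD Hvs c Hc [L0 [Hin0 Hcomp]] L HL e t1 t2 H1 H2 P1 P2.
have Hsz : (size (cd_p c e) <= 1)%N.
  case: (leqP (size (cd_p c e)) 1) => // Hgt; exfalso.
  case: Hin0 => _ [_ [Hxs0 _]].
  case: (Hxs0 e) => xs0 [Hs0 [Hr0 [Hord0 [Hval0 Hzero0]]]].
  have Hi0 : (0 < size xs0)%N by rewrite Hs0; apply: ltn_trans Hgt.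
  have Hi1 : (1 < size xs0)%N by rewrite Hs0.
  have [Ha1 Ha2] := Hr0 _ Hi0.
  have [Hb1 Hb2] := Hr0 _ Hi1.
  have Hab := Hord0 0%N 1%N isT Hi1.
  have pos : forall i, (i < size xs0)%N -> (0 < L0 (PE e (nth 0%R xs0 i)))%Z.
    move=> i hi; rewrite Hval0 //.
    have := (all_nthP 0%N (Hc e)) i; rewrite -Hs0 => /(_ hi) /ltP; lia.
  have La := pos _ Hi0; have Lb := pos _ Hi1.
  set a := nth 0%R xs0 0 in Ha1 Ha2 Hab La.
  set b := nth 0%R xs0 1 in Hb1 Hb2 Hab Lb.
  set y := ((a + b) / 2)%R.
  have Hy0 : L0 (PE e y) = 0%Z.
    apply: Hzero0; first (rewrite /y; lra).
    move=> i hi; case: i hi => [|i] hi; first (rewrite /y -/a; lra).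
    case: i hi => [|i] hi; first (rewrite /y -/b; lra).
    have := Hord0 1%N i.+2 isT hi; rewrite -/b /y; lra.
  case: Hcomp => comp [Hlt [_ Hiff]].
  have Vy : valid_pt (PE e y) by rewrite /=/y; lra.
  have NIy : ~ interior_supp L0 (PE e y).
    by move=> [e' [t' [_ [_ h]]]]; rewrite Hy0 in h; lia.
  have NIv : ~ interior_supp L0 (PV (mg_src e)) by move=> [e' [t' [h _]]].
  have c1 := Hlt _ Vy NIy; have c2 := Hlt (PV (mg_src e)) I NIv.
  have Heq : comp (PE e y) = comp (PV (mg_src e)).
    move: c1 c2; rewrite !ltnS !leqn0 => /eqP -> /eqP -> //.
  have Hc' := proj1 (Hiff _ (PV (mg_src e)) Vy NIy I NIv) Heq.
  have [hh _] := @inv_crst G L0 e a b Ha1 Hb2 Hab La Lb _ _ Hc'.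
  have : exists t, PE e y = PE e t /\ (a < t < b)%R by exists y; split => //; rewrite /y; lra.
  by move=> /hh [t [ht _]].
case: HL => _ [_ [Hxs _]].
case: (Hxs e) => xs [Hs [Hr [Hord [Hval Hzero]]]].
have find : forall t, (0 < t < mg_len e)%R -> (0 < L (PE e t))%Z ->
    exists i, (i < size xs)%N /\ t = nth 0%R xs i.
  move=> t ht hp; apply: NNPP => hn.
  have : L (PE e t) = 0%Z.
    apply: Hzero => // i hi heq; apply: hn; by exists i.
  lia.
have [i [hi ->]] := find _ H1 P1.
have [j [hj ->]] := find _ H2 P2.
have : i = 0%N by move: hi; rewrite Hs => /leq_trans/(_ Hsz); case: i.
have : j = 0%N by move: hj; rewrite Hs => /leq_trans/(_ Hsz); case: j.
by move=> -> ->.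
Qed.
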